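(* Let $L>0$, let $n$ be a positive integer, $\Delta x = 2L/n$, and let $X_n=\{x_0,\dots,x_{n-1}\}$ with $x_i=-L+i\Delta x$. Let $k\ge 1$ and let $\omega_1,\dots,\omega_k$ be discrete measures on $\mathbb{R}$ of the form $\omega_\ell=\sum_i a_i^\ell\,\delta_{s_i^\ell}$ (finitely many atoms) with $a_i^\ell\ge 0$ and $-L\le s_i^\ell\le L-\Delta x$ for all $i,\ell$. Fix a constant $C\in[0,1]$ and define, for $\varepsilon>0$, $$\delta(\varepsilon)=C+\int_\varepsilon^\infty (1-e^{\varepsilon-s})\,(\omega_1*\cdots*\omega_k)(s)\,ds .$$ For each $\ell$ let $\omega_\ell^{\mathrm L}=\sum_i a_i^\ell\,\delta_{s_i^{\mathrm L,\ell}}$ and $\omega_\ell^{\mathrm R}=\sum_i a_i^\ell\,\delta_{s_i^{\mathrm R,\ell}}$, where $s_i^{\mathrm L,\ell}=\max\{x\in X_n: x\le s_i^\ell\}$ and $s_i^{\mathrm R,\ell}=\min\{x\in X_n: x\ge s_i^\ell\}$, and let $\delta^{\mathrm L}(\varepsilon)$, $\delta^{\mathrm R}(\varepsilon)$ be defined by the same formula (with the same constant $C$) with $\omega_\ell$ replaced by $\omega_\ell^{\mathrm L}$, resp. $\omega_\ell^{\mathrm R}$. Then for all $\varepsilon>0$, $$\delta^{\mathrm L}(\varepsilon)\le\delta(\varepsilon)\le\delta^{\mathrm R}(\varepsilon).$$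
   Context: $\delta_t$ denotes the Dirac point mass at $t$. The convolution of discrete measures is $\big(\sum_i a_i\delta_{t_i}\big)*\big(\sum_j b_j\delta_{u_j}\big)=\sum_{i,j}a_ib_j\,\delta_{t_i+u_j}$, and $\int_\varepsilon^\infty h(s)\,\mu(s)\,ds$ for a discrete measure $\mu=\sum_i c_i\delta_{t_i}$ means $\sum_{i:\,t_i\ge\varepsilon} c_i h(t_i)$. In the paper, $C=1-\prod_{\ell}(1-\delta_\ell(\infty))$ is the contribution of outcomes with infinite privacy loss, which is unaffected by the grid approximation. *)

(* Defs.v *)
From Stdlib Require Import Reals Lra List.
Import ListNotations.
Open Scope R_scope.

(* A finitely supported discrete measure sum_i a_i delta_{t_i},
   represented as the list of pairs (a_i, t_i) (weight, atom). *)
Definition dmeas := list (R * R).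

(* Convolution of discrete measures:
   (sum_i a_i d_{t_i}) * (sum_j b_j d_{u_j}) = sum_{i,j} a_i b_j d_{t_i+u_j}. *)
Definition dconv (m1 m2 : dmeas) : dmeas :=
  flat_map (fun p => map (fun q => (fst p * fst q, snd p + snd q)) m2) m1.

Definition dconv_all (ws : list dmeas) : dmeas :=
  fold_right dconv [(1, 0)] ws.

(* int_eps^infty h(s) mu(s) ds := sum_{i : t_i >= eps} c_i h(t_i). *)
Definition tail_int (eps : R) (h : R -> R) (mu : dmeas) : R :=
  fold_right Rplus 0
    (map (fun p => if Rle_dec eps (snd p) then fst p * h (snd p) else 0) mu).

Definition delta_fn (C : R) (ws : list dmeas) (eps : R) : R :=
  C + tail_int eps (fun s => 1 - exp (eps - s)) (dconv_all ws).

Definition dx (L : R) (n : nat) : R := 2 * L / INR n.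
Definition grid (L : R) (n : nat) : list R :=
  map (fun i => - L + INR i * dx L n) (seq 0 n).

(* s^L = max {x in X_n : x <= s}   (default -L = x_0, which lies in the set
   whenever s >= -L) *)
Definition round_L (L : R) (n : nat) (s : R) : R :=
  fold_right Rmax (- L)
    (filter (fun x => if Rle_dec x s then true else false) (grid L n)).

(* s^R = min {x in X_n : x >= s}   (default L - dx = x_{n-1}, which lies in
   the set whenever s <= L - dx) *)
Definition round_R (L : R) (n : nat) (s : R) : R :=
  fold_right Rmin (L - dx L n)
    (filter (fun x => if Rle_dec s x then true else false) (grid L n)).

Definition shift_atoms (f : R -> R) (w : dmeas) : dmeas :=
  map (fun p => (fst p, f (snd p))) w.

(* Main.v *)
Require Import Defs.
From Stdlib Require Import Reals List Lra.
Import ListNotations.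
Open Scope R_scope.

Definition le_meas (m1 m2 : dmeas) : Prop :=
  Forall2 (fun p q => fst p = fst q /\ 0 <= fst p /\ snd p <= snd q) m1 m2.

Lemma g_mono (eps t1 t2 : R) : t1 <= t2 ->
  (if Rle_dec eps t1 then 1 - exp (eps - t1) else 0) <=
  (if Rle_dec eps t2 then 1 - exp (eps - t2) else 0).
Proof.
  intros H.
  destruct (Rle_dec eps t1), (Rle_dec eps t2); try lra.
  - assert (exp (eps - t2) <= exp (eps - t1)).
    { destruct (Req_dec t1 t2). subst; lra.
      left; apply exp_increasing; lra. }
    lra.
  - assert (exp (eps - t2) <= exp 0).
    { destruct (Req_dec eps t2). subst. replace (t2 - t2) with 0 by ring. lra.
      left; apply exp_increasing; lra. }
    rewrite exp_0 in H0. lra.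
Qed.

Lemma tail_mono eps m1 m2 : le_meas m1 m2 ->
  tail_int eps (fun s => 1 - exp (eps - s)) m1 <=
  tail_int eps (fun s => 1 - exp (eps - s)) m2.
Proof.
  induction 1 as [|p q l1 l2 [H1 [H2 H3]] _ IH]; unfold tail_int in *; simpl.
  - lra.
  - apply Rplus_le_compat; [|exact IH].
    pose proof (g_mono eps _ _ H3).
    rewrite <- H1.
    destruct (Rle_dec eps (snd p)), (Rle_dec eps (snd q));
      try (apply Rmult_le_compat_l; lra); nra.
Qed.

Lemma le_meas_app a1 a2 b1 b2 : le_meas a1 a2 -> le_meas b1 b2 ->
  le_meas (a1 ++ b1) (a2 ++ b2).
Proof. intros; apply Forall2_app; auto. Qed.

Lemma le_meas_map p q b1 b2 : fst p = fst q -> 0 <= fst p -> snd p <= snd q ->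
  le_meas b1 b2 ->
  le_meas (map (fun r => (fst p * fst r, snd p + snd r)) b1)
          (map (fun r => (fst q * fst r, snd q + snd r)) b2).
Proof.
  intros H1 H2 H3; induction 1 as [|r s l1 l2 [G1 [G2 G3]] _ IH]; simpl;
    constructor; auto; simpl.
  rewrite H1, G1. rewrite H1 in H2. rewrite G1 in G2.
  split; [reflexivity| split; [apply Rmult_le_pos; auto| lra]].
Qed.

Lemma dconv_mono a1 a2 b1 b2 : le_meas a1 a2 -> le_meas b1 b2 ->
  le_meas (dconv a1 b1) (dconv a2 b2).
Proof.
  intros Ha Hb; induction Ha as [|p q l1 l2 [H1 [H2 H3]] _ IH]; unfold dconv in *; simpl.
  - constructor.
  - apply le_meas_app; auto. apply le_meas_map; auto.
Qed.

Lemma dconv_all_mono ws1 ws2 : Forall2 le_meas ws1 ws2 ->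
  le_meas (dconv_all ws1) (dconv_all ws2).
Proof.
  induction 1; unfold dconv_all in *; simpl.
  - repeat constructor; simpl; lra.
  - apply dconv_mono; auto.
Qed.

Lemma fold_max_le (a s : R) l : a <= s -> (forall x, In x l -> x <= s) ->
  fold_right Rmax a l <= s.
Proof.
  intros Ha; induction l; simpl; intros H; auto.
  apply Rmax_lub; auto.
Qed.

Lemma fold_min_ge (a s : R) l : s <= a -> (forall x, In x l -> s <= x) ->
  s <= fold_right Rmin a l.
Proof.
  intros Ha; induction l; simpl; intros H; auto.
  apply Rmin_glb; auto.
Qed.

Lemma round_L_le L n s : - L <= s -> round_L L n s <= s.
Proof.
  intros H; unfold round_L; apply fold_max_le; auto.
  intros x Hx; apply filter_In in Hx as [_ Hx].
  destruct (Rle_dec x s); auto; discriminate.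
Qed.

Lemma round_R_ge L n s : s <= L - dx L n -> s <= round_R L n s.
Proof.
  intros H; unfold round_R; apply fold_min_ge; auto.
  intros x Hx; apply filter_In in Hx as [_ Hx].
  destruct (Rle_dec s x); auto; discriminate.
Qed.

Theorem lemma5 (L : R) (n : nat) (ws : list dmeas) (C eps : R) :
  0 < L -> (0 < n)%nat -> (1 <= length ws)%nat ->
  (forall w, In w ws -> forall p, In p w ->
      0 <= fst p /\ - L <= snd p <= L - dx L n) ->
  0 <= C <= 1 -> 0 < eps ->
  delta_fn C (map (shift_atoms (round_L L n)) ws) eps <= delta_fn C ws eps /\
  delta_fn C ws eps <= delta_fn C (map (shift_atoms (round_R L n)) ws) eps.
Proof.
  intros _ _ _ Hw _ _. unfold delta_fn. split; apply Rplus_le_compat_l;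
    apply tail_mono, dconv_all_mono.
  - induction ws as [|w ws IH]; simpl; constructor.
    + assert (Hp := Hw w (or_introl eq_refl)). clear IH Hw.
      induction w as [|p w IHw]; simpl; constructor.
      * destruct (Hp p (or_introl eq_refl)) as [A [B _]]. simpl.
        split; [reflexivity|split; auto]. apply round_L_le; auto.
      * apply IHw; intros; apply Hp; right; auto.
    + apply IH; intros; eapply Hw; [right|]; eauto.
  - induction ws as [|w ws IH]; simpl; constructor.
    + assert (Hp := Hw w (or_introl eq_refl)). clear IH Hw.
      induction w as [|p w IHw]; simpl; constructor.
      * destruct (Hp p (or_introl eq_refl)) as [A [_ B]]. simpl.
        split; [reflexivity|split; auto]. apply round_R_ge; auto.
      * apply IHw; intros; apply Hp; right; auto.
    + apply IH; intros; eapply Hw; [right|]; eauto.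
Qed.
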